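(* Let $L:\mathbb{R}^d\times\mathbb{R}^{d+1}\to\mathbb{R}$ be such that $L(w,z)$ is convex in $w$, let $\nabla_1L(w,z)$ be a sub-gradient of $L(\cdot,z)$ at $w$, and assume there are constants $A,B\ge0$ with $\|\nabla_1 L(w,z)\|^2\le A L(w,z)+B$ for all $w\in\mathbb{R}^d$, $z\in\mathbb{R}^{d+1}$. Let $\eta>0$, $g\ge0$, $\theta\in[0,\infty]$, $w\in\mathbb{R}^d$, $z\in\mathbb{R}^{d+1}$, and let \[ w'=T_1\big(w-\eta\nabla_1L(w,z),\ g\eta,\ \theta\big). \] Then for all $\bar w\in\mathbb{R}^d$, \[ (1-0.5A\eta)L(w,z)+g\|w'\cdot I(|w'|\le\theta)\|_1\le L(\bar w,z)+g\|\bar w\cdot I(|w'|\le\theta)\|_1+\frac{\eta}{2}B+\frac{\|\bar w-w\|^2-\|\bar w-w'\|^2}{2\eta}. \]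
   Context: $\|\cdot\|$ is the Euclidean norm and $\|\cdot\|_1$ the $1$-norm. $T_1(v,\alpha,\theta)$ is applied coordinatewise: $T_1(v_j,\alpha,\theta)=\max(0,v_j-\alpha)$ if $v_j\in[0,\theta]$, $=\min(0,v_j+\alpha)$ if $v_j\in[-\theta,0]$, and $=v_j$ otherwise. For $v,v'\in\mathbb{R}^d$, $\|v\cdot I(|v'|\le\theta)\|_1=\sum_{j=1}^d|v_j|\,I(|v'_j|\le\theta)$ with $I$ the indicator function. *)

(* Defs.v *)
From HB Require Import structures.
From mathcomp Require Import all_boot all_order all_algebra.
From mathcomp Require Import reals constructive_ereal.
Set Implicit Arguments. Unset Strict Implicit. Unset Printing Implicit Defensive.
Import Order.TTheory GRing.Theory Num.Theory.
Local Open Scope ring_scope.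

Section Defs.
Variable R : realType.

Definition sqnorm (n : nat) (v : 'rV[R]_n) : R := \sum_(j < n) (v 0 j) ^+ 2.

Definition dotp (n : nat) (u v : 'rV[R]_n) : R := \sum_(j < n) u 0 j * v 0 j.

Definition masked_norm1 (n : nat) (v v' : 'rV[R]_n) (theta : \bar R) : R :=
  \sum_(j < n) `|v 0 j| * (if (`|v' 0 j|%:E <= theta)%E then 1 else 0).

Definition T1_coord (x alpha : R) (theta : \bar R) : R :=
  if (0 <= x) && (x%:E <= theta)%E then Num.max 0 (x - alpha)
  else if (x <= 0) && ((- x)%:E <= theta)%E then Num.min 0 (x + alpha)
  else x.

Definition T1 (n : nat) (v : 'rV[R]_n) (alpha : R) (theta : \bar R) : 'rV[R]_n :=
  \row_(j < n) T1_coord (v 0 j) alpha theta.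

Definition convex_fun (n : nat) (f : 'rV[R]_n -> R) : Prop :=
  forall (u v : 'rV[R]_n) (t : R), 0 <= t <= 1 ->
    f (t *: u + (1 - t) *: v) <= t * f u + (1 - t) * f v.

Definition is_subgradient (n : nat) (f : 'rV[R]_n -> R) (w s : 'rV[R]_n) : Prop :=
  forall u : 'rV[R]_n, f w + dotp s (u - w) <= f u.

End Defs.

(* Main.v *)
Require Import Defs.
From HB Require Import structures.
From mathcomp Require Import all_boot all_order all_algebra.
From mathcomp Require Import reals constructive_ereal.
From mathcomp Require Import ring lra.
Import Order.TTheory GRing.Theory Num.Theory.
Local Open Scope ring_scope.

Lemma coord (R : realType) (x a b : R) (th : \bar R) : 0 <= a -> (0 <= th)%E ->
  0 <= (b - x)^+2 - (b - T1_coord x a th)^+2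
       - 2 * a * (`|T1_coord x a th| * (if (`|T1_coord x a th|%:E <= th)%E then 1 else 0))
       + 2 * a * (`|b| * (if (`|T1_coord x a th|%:E <= th)%E then 1 else 0)).
Proof.
move=> a0 th0; rewrite /T1_coord.
case: ifP => [/andP [x0 xth] | H1].
  have ->: (`|Num.max 0 (x - a)|%:E <= th)%E.
    apply: le_trans xth; rewrite lee_fin.
    rewrite /Order.max; case: ifP => h; rewrite ?normr0 // ger0_norm; lra.
  rewrite !mulr1 /Order.max; case: ifP => h.
    rewrite ger0_norm; last by lra.
    have [hb|hb] := lerP 0 b; [rewrite ger0_norm //|rewrite ltr0_norm //]; nra.
  rewrite normr0.
  have [hb|hb] := lerP 0 b; [rewrite ger0_norm //|rewrite ltr0_norm //]; nra.
case: ifP => [/andP [x0 xth] | H2].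
  have ->: (`|Num.min 0 (x + a)|%:E <= th)%E.
    apply: le_trans xth; rewrite lee_fin.
    rewrite /Order.min; case: ifP => h; rewrite ?normr0 ?oppr_ge0 // ler0_norm; lra.
  rewrite !mulr1 /Order.min; case: ifP => h.
    rewrite normr0.
    have [hb|hb] := lerP 0 b; [rewrite ger0_norm //|rewrite ltr0_norm //]; nra.
  rewrite ler0_norm; last by lra.
  have [hb|hb] := lerP 0 b; [rewrite ger0_norm //|rewrite ltr0_norm //]; nra.
have ->: (`|x|%:E <= th)%E = false.
  have [hx|hx] := lerP 0 x.
    by rewrite ger0_norm //; move: H1; rewrite hx.
  rewrite ltr0_norm //; move: H2; rewrite (ltW hx) //.
rewrite !mulr0 subrr; lra.
Qed.

Theorem lemma1 (R : realType) (d : nat)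
  (L : 'rV[R]_d -> 'rV[R]_d.+1 -> R)
  (gradL : 'rV[R]_d -> 'rV[R]_d.+1 -> 'rV[R]_d)
  (A B : R)
  (hconv : forall z, convex_fun (fun w => L w z))
  (hsub : forall w z, is_subgradient (fun u => L u z) w (gradL w z))
  (hA : 0 <= A) (hB : 0 <= B)
  (hgrowth : forall w z, sqnorm (gradL w z) <= A * L w z + B)
  (eta g : R) (theta : \bar R)
  (heta : 0 < eta) (hg : 0 <= g) (htheta : (0 <= theta)%E)
  (w : 'rV[R]_d) (z : 'rV[R]_d.+1) :
  let w' := T1 (w - eta *: gradL w z) (g * eta) theta in
  forall wbar : 'rV[R]_d,
    (1 - 2^-1 * A * eta) * L w z + g * masked_norm1 w' w' theta
    <= L wbar z + g * masked_norm1 wbar w' theta + eta / 2 * B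
       + (sqnorm (wbar - w) - sqnorm (wbar - w')) / (2 * eta).
Proof.
move=> w' wbar.
set s := gradL w z.
have Hs := hsub w z wbar; rewrite /= -/s in Hs.
have Hg := hgrowth w z; rewrite -/s in Hg.
have Hsum : 0 <= sqnorm (wbar - w) - sqnorm (wbar - w') + 2 * eta * dotp s (wbar - w)
   + eta ^+ 2 * sqnorm s - 2 * (g * eta) * masked_norm1 w' w' theta
   + 2 * (g * eta) * masked_norm1 wbar w' theta.
  have -> : sqnorm (wbar - w) - sqnorm (wbar - w') + 2 * eta * dotp s (wbar - w)
   + eta ^+ 2 * sqnorm s - 2 * (g * eta) * masked_norm1 w' w' theta
   + 2 * (g * eta) * masked_norm1 wbar w' theta =
   \sum_(j < d) ((wbar - w) 0 j ^+ 2 - (wbar - w') 0 j ^+ 2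
     + 2 * eta * (s 0 j * (wbar - w) 0 j) + eta ^+ 2 * s 0 j ^+ 2
     - 2 * (g * eta) * (`|w' 0 j| * (if (`|w' 0 j|%:E <= theta)%E then 1 else 0))
     + 2 * (g * eta) * (`|wbar 0 j| * (if (`|w' 0 j|%:E <= theta)%E then 1 else 0))).
    by rewrite !(sumrB, big_split) /= /sqnorm /dotp /masked_norm1 !mulr_sumr.
  apply: sumr_ge0 => j _.
  have := @coord R ((w - eta *: s) 0 j) (g * eta) (wbar 0 j) theta (mulr_ge0 hg (ltW heta)) htheta.
  rewrite /w' /T1 !mxE.
  set y := T1_coord _ _ _.
  set m := (if _ then _ else _).
  move=> H; nra.
set X := (sqnorm (wbar - w) - sqnorm (wbar - w')) / (2 * eta).
have HX : sqnorm (wbar - w) - sqnorm (wbar - w') = X * (2 * eta).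
  rewrite /X mulfVK //; lra.
rewrite HX in Hsum.
have H2 : 0 <= X + dotp s (wbar - w) + eta / 2 * sqnorm s - g * masked_norm1 w' w' theta
   + g * masked_norm1 wbar w' theta.
  have e2 : 0 < 2 * eta by lra.
  rewrite -(pmulr_rge0 _ e2).
  have -> : 2 * eta * (X + dotp s (wbar - w) + eta / 2 * sqnorm s - g * masked_norm1 w' w' theta
   + g * masked_norm1 wbar w' theta) = X * (2 * eta) + 2 * eta * dotp s (wbar - w)
   + eta ^+ 2 * sqnorm s - 2 * (g * eta) * masked_norm1 w' w' theta
   + 2 * (g * eta) * masked_norm1 wbar w' theta.
    by field.
  by [].
have H3 : eta * sqnorm s <= eta * (A * L w z + B) by rewrite ler_pM2l.
lra.
Qed.
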